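(* Let $G^\sigma$ be a connected oriented unicyclic graph of order $n$ with girth $k$, where $n>k$. Then $sr(G^\sigma)\geq k$ if $k$ is even and $sr(G^\sigma)\geq k+1$ if $k$ is odd. This bound is sharp (it is attained, e.g., by every orientation of the graph obtained from $C_k$ by attaching $n-k$ pendant edges at one vertex of $C_k$).
   Context: An oriented graph $G^\sigma$ is a simple graph $G$ together with an orientation of each edge. Its skew-adjacency matrix $S(G^\sigma)=(s_{ij})$ has $s_{ij}=1$ if there is an arc from $v_i$ to $v_j$, $s_{ij}=-1$ if there is an arc from $v_j$ to $v_i$, and $0$ otherwise; the skew-rank $sr(G^\sigma)$ is the rank of $S(G^\sigma)$. A unicyclic graph is a connected graph with exactly one cycle; its girth is the length of that cycle. *)

(* Defs.v *)
From mathcomp Require Import all_boot all_order all_algebra.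
Set Implicit Arguments. Unset Strict Implicit. Unset Printing Implicit Defensive.
Import GRing.Theory Num.Theory.

Definition oriented (n : nat) (arc : rel 'I_n) : Prop :=
  irreflexive arc /\ (forall i j, arc i j -> ~~ arc j i).

Definition underlying (n : nat) (arc : rel 'I_n) : rel 'I_n :=
  fun i j => arc i j || arc j i.

Definition skew_adj (n : nat) (arc : rel 'I_n) : 'M[rat]_n :=
  \matrix_(i, j) (if arc i j then 1 else if arc j i then -1 else 0)%R.

Definition skew_rank (n : nat) (arc : rel 'I_n) : nat := \rank (skew_adj arc).

Definition is_cycle (n : nat) (adj : rel 'I_n) (s : seq 'I_n) : Prop :=
  [/\ 3 <= size s, uniq s & cycle adj s].

Definition cycle_edges (n : nat) (s : seq 'I_n) : {set {set 'I_n}} :=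
  [set [set p.1; p.2] | p in zip s (rot 1 s)].

Definition connected (n : nat) (adj : rel 'I_n) : Prop :=
  forall x y, connect adj x y.

Definition unicyclic (n : nat) (adj : rel 'I_n) : Prop :=
  connected adj /\
  exists s, is_cycle adj s /\
    forall t, is_cycle adj t -> cycle_edges t = cycle_edges s.

(* Girth k: there is a cycle of length k (for a unicyclic graph, the cycle). *)
Definition has_girth (n : nat) (adj : rel 'I_n) (k : nat) : Prop :=
  exists s, is_cycle adj s /\ size s = k.

(* The graph obtained from C_k (on vertices 0..k-1) by attaching the n-k
   pendant vertices k..n-1 at vertex 0 of C_k. *)
Definition cycle_with_pendants (n k : nat) : rel 'I_n :=
  fun i j =>
    [|| [&& val i < k, val j < k &
           (val j == (val i).+1 %% k) || (val i == (val j).+1 %% k)],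
        (val i == 0) && (k <= val j)
      | (val j == 0) && (k <= val i)].
Arguments cycle_with_pendants : clear implicits.

(* Main.v *)
Require Import Defs.
From mathcomp Require Import all_boot all_order all_algebra.
From mathcomp Require Import zify.
Set Implicit Arguments. Unset Strict Implicit. Unset Printing Implicit Defensive.
Import GRing.Theory Num.Theory.
Open Scope ring_scope.
Open Scope nat_scope.


Lemma rank_trig (F : fieldType) n m (A : 'M[F]_n) (r c : 'I_m -> 'I_n) :
  (forall i j : 'I_m, (i < j)%N -> A (r i) (c j) = 0%R) ->
  (forall i, A (r i) (c i) != 0%R) -> (m <= \rank A)%N.
Proof.
move=> Hz Hd.
set B := \matrix_(i, j) A (r i) (c j).
have HB : \rank B = m.
  apply: mxrank_unit; rewrite unitmxE det_trig; last first.
    by apply/is_trig_mxP => i j lij; rewrite mxE Hz.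
  rewrite unitfE; apply/prodf_neq0 => i _; by rewrite mxE.
rewrite -HB.
have -> : B = (rowsub c (rowsub r A)^T)^T.
  by apply/matrixP => i j; rewrite !mxE.
rewrite mxrank_tr.
apply: (leq_trans (mxrankS (rowsub_sub _ _))).
by rewrite mxrank_tr; apply: mxrankS; apply: rowsub_sub.
Qed.

Lemma rank_rows (F : fieldType) n q p (A : 'M[F]_(n, q)) (e : 'I_p -> 'I_n) :
  (forall i, row i A != 0%R -> exists t, i = e t) -> (\rank A <= p)%N.
Proof.
move=> H.
have : (A <= rowsub e A)%MS.
  apply/row_subP => i.
  case: (eqVneq (row i A) 0%R) => [->|/H [t ->]]; first exact: sub0mx.
  have -> : row (e t) A = row t (rowsub e A) by apply/rowP => j; rewrite !mxE.
  exact: row_sub.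
move/mxrankS => h; exact: leq_trans h (rank_leq_row _).
Qed.

Lemma modk a k : (a < k + k)%N -> (a %% k = a /\ a < k \/ a %% k = a - k /\ k <= a)%N.
Proof.
move=> h; case: (ltnP a k) => hk; first by left; rewrite modn_small.
right; split=> //.
have -> : a = (a - k) + k by rewrite subnK.
rewrite modnDr modn_small; lia.
Qed.



Lemma skew_neq0 n (arc : rel 'I_n) i j :
  (skew_adj arc i j != 0%R) = underlying arc i j.
Proof.
rewrite /skew_adj mxE /underlying.
by case: (arc i j); case: (arc j i) => //=; rewrite ?oppr_eq0 oner_eq0.
Qed.

Lemma lemmaB n (arc : rel 'I_n) (h : nat) (y : nat -> 'I_n) :
  (forall a, a.+1 < 2 * h -> underlying arc (y a) (y a.+1)) ->
  (forall a b, a < 2 * h -> b < 2 * h -> underlying arc (y a) (y b) ->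
     a = b.+1 \/ b = a.+1 \/ (exists p q, a = 2 * p + 1 /\ b = 2 * q + 1)) ->
  2 * h <= skew_rank arc.
Proof.
move=> Hc Hn.
pose fr i := if i < h then 2 * i else 2 * h - 1 - 2 * (i - h).
pose fc i := if i < h then 2 * i + 1 else 2 * h - 2 - 2 * (i - h).
apply: (@rank_trig _ _ _ _ (fun i : 'I_(2 * h) => y (fr i))
                           (fun i : 'I_(2 * h) => y (fc i))).
- move=> i j lij; apply/eqP; rewrite -[_ == _]negbK skew_neq0; apply/negP => H.
  have hi := ltn_ord i; have hj := ltn_ord j.
  have H1 : fr i < 2 * h by rewrite /fr; case: ifP => /= ?; lia.
  have H2 : fc j < 2 * h by rewrite /fc; case: ifP => /= ?; lia.
  have := Hn _ _ H1 H2 H; rewrite /fr /fc.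
  case: (ltnP i h) => hih; case: (ltnP j h) => hjh;
  move=> [|[|[p [q []]]]]; lia.
- move=> i; rewrite skew_neq0 /fr /fc; have hi := ltn_ord i.
  case: (ltnP i h) => hih.
  + rewrite addn1; apply: Hc; lia.
  + rewrite /underlying orbC -/(underlying arc _ _).
    have -> : 2 * h - 1 - 2 * (i - h) = (2 * h - 2 - 2 * (i - h)).+1 by lia.
    apply: Hc; lia.
Qed.

Lemma cwpP n k (i j : 'I_n) : 0 < k -> cycle_with_pendants n k i j ->
  [\/ [/\ i < k, j < k & (i.+1 < k /\ nat_of_ord j = i.+1 \/ i.+1 = k /\ nat_of_ord j = 0)],
      [/\ j < k, i < k & (j.+1 < k /\ nat_of_ord i = j.+1 \/ j.+1 = k /\ nat_of_ord i = 0)],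
      (nat_of_ord i = 0 /\ k <= j) | (nat_of_ord j = 0 /\ k <= i)].
Proof.
move=> k0; rewrite /cycle_with_pendants /=.
move/or3P => [/and3P [h1 h2 /orP [/eqP h3|/eqP h3]] | /andP [/eqP h1 h2] | /andP [/eqP h1 h2]].
- have [[e1 e2]|[e1 e2]] := @modk (i.+1) k ltac:(lia); rewrite e1 in h3; apply: Or41; split => //; lia.
- have [[e1 e2]|[e1 e2]] := @modk (j.+1) k ltac:(lia); rewrite e1 in h3; apply: Or42; split => //; lia.
- by apply: Or43.
- by apply: Or44.
Qed.

Lemma rank_rows' (F : fieldType) n q p (A : 'M[F]_(n, q)) (e : 'I_p -> 'I_n) :
  (forall i j, A i j != 0%R -> exists t, i = e t) -> (\rank A <= p)%N.
Proof.
move=> H; apply: rank_rows => i Hi.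
have [j Hj] : exists j, A i j != 0%R.
  apply/existsP; apply: contraR Hi; rewrite negb_exists => /forallP Hz.
  by apply/eqP/rowP => j; rewrite !mxE; apply/eqP; move: (Hz j); rewrite negbK.
exact: H Hj.
Qed.

Lemma split_rank (F : fieldType) n (A : 'M[F]_n) (P : pred 'I_n) :
  \rank A <= \rank (\matrix_(i, j) if P i then A i j else 0%R)
           + \rank (\matrix_(i, j) if P i then 0%R else A i j).
Proof.
apply: leq_trans (mxrank_add _ _); apply: eq_leq; congr mxrank.
by apply/matrixP => i j; rewrite !mxE; case: (P i); rewrite ?addr0 ?add0r.
Qed.

Lemma part2 (n k : nat) (arc : rel 'I_n) :
      3 <= k -> k < n ->
      oriented arc ->
      (forall i j, underlying arc i j = cycle_with_pendants n k i j) ->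
      skew_rank arc = (if odd k then k.+1 else k).
Proof.
move=> k3 kn _ Hu.
have k0 : 0 < k by lia.
pose d := Ordinal kn.
have Hk2 : k %% 2 = odd k by rewrite modn2.
have vins : forall a, a < n -> nat_of_ord (insubd d a) = a.
  by move=> a ha; have := val_insubd d a; rewrite ha.
have Hent : forall i j, skew_adj arc i j != 0%R -> cycle_with_pendants n k i j.
  by move=> i j; rewrite skew_neq0 Hu.
have Hent' : forall i j, ((if arc i j then 1 else if arc j i then -1 else 0) != 0 :> rat)%R ->
   cycle_with_pendants n k i j.
  by move=> i j H; apply: Hent; rewrite /skew_adj mxE.
apply/eqP; rewrite eqn_leq; apply/andP; split.
-
  rewrite /skew_rank; case hk: (odd k); rewrite hk /= in Hk2.
  + apply: leq_trans (split_rank _ (fun i : 'I_n => nat_of_ord i < k)) _.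
    rewrite -addn1; apply: leq_add.
    * apply: (@rank_rows' _ _ _ _ _ (fun t : 'I_k => insubd d t)) => i j.
      rewrite mxE; case: ifP => hi; last by rewrite eqxx.
      move=> _; exists (Ordinal hi); apply: val_inj; rewrite /= vins //; lia.
    * rewrite -mxrank_tr.
      apply: (@rank_rows' _ _ _ _ _ (fun t : 'I_1 => insubd d 0)) => j i.
      rewrite !mxE; case: ifP => hi; first by rewrite eqxx.
      move/Hent'/(cwpP k0) => [[]|[]|[]|[]] *; try lia.
      exists ord0; apply: val_inj; rewrite /= vins; lia.
  + have [h' Hh'] : exists h', k = h' + h' by exists k./2; lia.
    apply: leq_trans (split_rank _ (fun i : 'I_n => (nat_of_ord i < k) && (nat_of_ord i %% 2 == 0))) _.
    rewrite Hh'; apply: leq_add.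
    * apply: (@rank_rows' _ _ _ _ _ (fun t : 'I_h' => insubd d (2 * t))) => i j.
      rewrite mxE; case: ifP => /andP hi; last by rewrite eqxx.
      move=> _; have ho : i %/ 2 < h' by lia.
      exists (Ordinal ho); apply: val_inj; rewrite /= vins; lia.
    * rewrite -mxrank_tr.
      apply: (@rank_rows' _ _ _ _ _ (fun t : 'I_h' => insubd d (2 * t))) => j i.
      rewrite !mxE; case: ifP => /andP hi; first by rewrite eqxx.
      move/Hent'/(cwpP k0) => H.
      have [hj1 hj2] : j < k /\ j %% 2 = 0.
        case: H => [[]|[]|[]|[]] *; lia.
      have ho : j %/ 2 < h' by lia.
      exists (Ordinal ho); apply: val_inj; rewrite /= vins; lia.
-
  pose y a := if a is a'.+1 then insubd d a' else d.
  have vy : forall a, a <= k -> nat_of_ord (y a) = if a is a'.+1 then a' else k.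
    by case => [|a] ha //=; rewrite vins; lia.
  clearbody y.
  have [h Hh] : exists h, (if odd k then k.+1 else k) = 2 * h.
    by exists ((if odd k then k.+1 else k)./2); case: (odd k) Hk2; lia.
  rewrite Hh; apply: (lemmaB (y := y)).
  + move=> a ha; rewrite Hu /cycle_with_pendants /= !vy; try (case: (odd k) Hh; lia).
    case: a ha => [|a] ha /=.
    - by rewrite leqnn !orbT.
    - have hk : a.+1 < k by case: (odd k) Hh; lia.
      by rewrite (modn_small hk) eqxx hk (ltnW hk).
  + move=> a b ha hb; rewrite Hu.
    have ha' : a <= k by case: (odd k) Hh; lia.
    have hb' : b <= k by case: (odd k) Hh; lia.
    move/(cwpP k0); rewrite !vy //.
    case: a ha ha' => [|a] ha ha'; case: b hb hb' => [|b] hb hb' /=.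
    all: move=> [[]|[]|[]|[]] *.
    all: repeat match goal with H : _ \/ _ |- _ => destruct H end.
    all: try first [ lia | (left; lia) | (right; left; lia) ].
    all: try (right; right; exists (a.+1 %/ 2), (b.+1 %/ 2); case: (odd k) Hh Hk2 => /= Hh Hk2; lia).
Qed.

Lemma nth_rot1 (T : Type) (d : T) (t : seq T) i :
  i < size t -> nth d (rot 1 t) i = nth d t (i.+1 %% size t).
Proof.
case: t => [//|a t] /= hi; rewrite rot1_cons nth_rcons.
case: ltnP => h1.
- by rewrite modn_small.
- have -> : i = size t by lia.
  by rewrite eqxx modnn.
Qed.

Section G.
Variable n : nat.
Variable d : 'I_n.

Lemma edge_in (t : seq 'I_n) i : i < size t ->
  [set nth d t i; nth d t (i.+1 %% size t)] \in cycle_edges t.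
Proof.
move=> hi.
have : (nth d t i, nth d t (i.+1 %% size t)) \in zip t (rot 1 t).
  rewrite -nth_rot1 // -(nth_zip d d) ?size_rot //; apply: mem_nth.
  by rewrite size_zip size_rot minnn.
by move/(imset_f (fun p : 'I_n * 'I_n => [set p.1; p.2])).
Qed.

Lemma edge_of (t : seq 'I_n) e : e \in cycle_edges t ->
  exists2 i, i < size t & e = [set nth d t i; nth d t (i.+1 %% size t)].
Proof.
case/imsetP => p hp ->.
case/(nthP (d, d)): hp => i; rewrite size_zip size_rot minnn => hi <-.
by exists i => //; rewrite nth_zip ?size_rot //= nth_rot1.
Qed.

Lemma pair_eq (a b c e : 'I_n) : [set a; b] = [set c; e] -> a != b ->
  (a = c /\ b = e) \/ (a = e /\ b = c).
Proof.
move=> H ab.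
have : a \in [set c; e] by rewrite -H set21.
have : b \in [set c; e] by rewrite -H set22.
move=> /set2P [] hb /set2P [] ha; subst; auto; by rewrite eqxx in ab.
Qed.

Variable adj : rel 'I_n.
Hypothesis sym : forall i j, adj i j = adj j i.
Hypothesis irr : forall i, adj i i = false.

Lemma cyc_adj (t : seq 'I_n) : cycle adj t -> forall i, i < size t ->
  adj (nth d t i) (nth d t (i.+1 %% size t)).
Proof.
case: t => [//|a t] Hc i hi.
move: Hc => /= /(pathP d) /(_ i); rewrite size_rcons => /(_ hi).
rewrite -rcons_cons nth_rcons hi -rot1_cons nth_rot1 //.
Qed.

Variable s : seq 'I_n.
Hypothesis Hs : forall i, i.+1 < size s -> adj (nth d s i) (nth d s i.+1).

Lemma path_seg l p : p + l < size s ->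
  path adj (nth d s p) [seq nth d s i | i <- iota p.+1 l].
Proof.
elim: l p => [//|l IH] p hp /=.
rewrite Hs; last lia.
apply: IH; lia.
Qed.

Lemma last_seg l p :
  last (nth d s p) [seq nth d s i | i <- iota p.+1 l] = nth d s (p + l).
Proof.
elim: l p => [|l IH] p /=; first by rewrite addn0.
by rewrite IH addSnnS.
Qed.

Hypothesis us : uniq s.

Lemma uniq_seg l p : p + l < size s ->
  uniq (nth d s p :: [seq nth d s i | i <- iota p.+1 l]).
Proof.
move=> hp.
have -> : nth d s p :: [seq nth d s i | i <- iota p.+1 l] =
          [seq nth d s i | i <- iota p l.+1] by [].
rewrite map_inj_in_uniq ?iota_uniq //.
move=> i j; rewrite !mem_iota => /andP[_ h1] /andP[_ h2] /eqP.
rewrite -addnS in hp.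
rewrite nth_uniq //; [by move/eqP | exact: leq_trans h1 hp | exact: leq_trans h2 hp].
Qed.

Lemma sub_seg l p x : x \in [seq nth d s i | i <- iota p l] -> p + l <= size s -> x \in s.
Proof.
case/mapP => i; rewrite mem_iota => /andP[_ h] -> hl; apply: mem_nth; exact: leq_trans h hl.
Qed.

End G.

Section G2.
Variable n : nat.
Variable d : 'I_n.
Variable adj : rel 'I_n.
Hypothesis sym : forall i j, adj i j = adj j i.
Hypothesis irr : forall i, adj i i = false.
Variable s : seq 'I_n.
Hypothesis us : uniq s.
Hypothesis Hcyc : cycle adj s.
Hypothesis hs3 : 3 <= size s.
Hypothesis hU : forall t, is_cycle adj t -> cycle_edges t = cycle_edges s.

Lemma Hs : forall i, i.+1 < size s -> adj (nth d s i) (nth d s i.+1).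
Proof.
move=> i hi; have := cyc_adj d Hcyc (ltnW hi); by rewrite modn_small.
Qed.

Lemma nth_inj i j : i < size s -> j < size s -> nth d s i = nth d s j -> i = j.
Proof. by move=> hi hj /eqP; rewrite nth_uniq // => /eqP. Qed.

Lemma chord p q : p < q -> q < size s -> p.+1 < q ->
  adj (nth d s p) (nth d s q) -> p = 0 /\ q.+1 = size s.
Proof.
move=> hpq hq hpq2 ha.
set t := nth d s p :: [seq nth d s i | i <- iota p.+1 (q - p)].
have hpq' : p + (q - p) < size s by lia.
have hst : size t = (q - p).+1 by rewrite /= size_map size_iota.
have Ht : is_cycle adj t.
  split; first by rewrite hst; lia.
  - rewrite /t; exact: (uniq_seg d us hpq').
  - rewrite /t /= rcons_path (path_seg Hs hpq') last_seg.
    have -> : p + (q - p) = q by lia.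
    by rewrite sym ha.
have := edge_in d (t := t) (i := q - p); rewrite hst => /(_ (ltnSn _)).
rewrite modnn.
have -> : nth d t (q - p) = nth d s q.
  have -> : q - p = (q - p).-1.+1 by lia.
  rewrite /t /= (nth_map 0); last by rewrite size_iota; lia.
  by rewrite nth_iota; [congr nth; lia | lia].
rewrite /t /= (hU Ht) => /(edge_of d) [i hi].
have hi1 : i.+1 %% size s < size s by rewrite ltn_pmod //; lia.
move/pair_eq => [].
  apply/negP => /eqP /(nth_inj _ _) H; have := H hq (ltn_trans hpq hq); lia.
move=> [/(nth_inj hq hi) e1 /(nth_inj (ltn_trans hpq hq) hi1) e2].
  have := @modk i.+1 (size s) ltac:(lia); lia.
move=> [/(nth_inj hq hi1) e1 /(nth_inj (ltn_trans hpq hq) hi) e2].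
have := @modk i.+1 (size s) ltac:(lia); lia.
Qed.

Lemma pend v p q : v \notin s -> p < q -> q < size s ->
  adj v (nth d s p) -> adj v (nth d s q) -> False.
Proof.
move=> hv hpq hq h1 h2.
set t := v :: nth d s p :: [seq nth d s i | i <- iota p.+1 (q - p)].
have hpq' : p + (q - p) < size s by lia.
have hst : size t = (q - p).+2 by rewrite /= size_map size_iota.
have Ht : is_cycle adj t.
  split; first by rewrite hst; lia.
  - rewrite /t cons_uniq (uniq_seg d us hpq') andbT.
    apply/negP => /(sub_seg (l := (q - p).+1)) H; rewrite H in hv => //; lia.
  - rewrite /t /= h1 /= rcons_path (path_seg Hs hpq') last_seg.
    have -> : p + (q - p) = q by lia.
    by rewrite sym h2.
have := edge_in d (t := t) (i := 0); rewrite hst => /(_ isT).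
rewrite modn_small; last lia.
rewrite /t /= (hU Ht) => /(edge_of d) [i hi].
have hi1 : i.+1 %% size s < size s by rewrite ltn_pmod //; lia.
move/pair_eq => [].
  apply/negP => /eqP E; move: hv; rewrite E mem_nth //; exact: ltn_trans hpq hq.
move=> [E _]; move: hv; rewrite E mem_nth //.
move=> [E _]; move: hv; rewrite E mem_nth //.
Qed.

Lemma chord_gen p q : p < size s -> q < size s -> adj (nth d s p) (nth d s q) ->
  q = p.+1 %% size s \/ p = q.+1 %% size s.
Proof.
have gen : forall p q, p < q -> q < size s -> adj (nth d s p) (nth d s q) ->
    q = p.+1 %% size s \/ p = q.+1 %% size s.
  move=> p' q' h1 h2 ha.
  case: (ltnP p'.+1 q') => h3.
  - have [-> e] := chord h1 h2 h3 ha; right; rewrite e modnn //.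
  - left; rewrite modn_small; lia.
move=> hp hq ha.
case: (ltngtP p q) => h.
- exact: gen.
- rewrite sym in ha; have := gen _ _ h hp ha; tauto.
- by rewrite h irr in ha.
Qed.

Lemma pend_gen v p q : v \notin s -> p < size s -> q < size s ->
  adj v (nth d s p) -> adj v (nth d s q) -> p = q.
Proof.
move=> hv hp hq h1 h2.
case: (ltngtP p q) => h //.
- by case: (pend hv h hq h1 h2).
- by case: (pend hv h hp h2 h1).
Qed.

End G2.

Lemma outside n (adj : rel 'I_n) (s : seq 'I_n) :
  connected adj -> size s < n -> s != [::] ->
  exists v, v \notin s /\ exists2 b, b \in s & adj v b.
Proof.
move=> Hc hs hne.
have [w hw] : exists w, w \notin s.
  case: (pickP (fun w => w \notin s)) => [w hw|H]; first by exists w.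
  have : n <= size s.
    rewrite -{1}(size_enum_ord n); apply: uniq_leq_size (enum_uniq _) _.
    by move=> x _; move: (H x) => /= /negbFE.
  lia.
case: s hne hs hw => [//|b0 s'] _ hs hw.
have := Hc w b0; case/connectP => p.
elim: p w hw => [|a p IH] w hw /=.
  by move=> _ e; move: hw; rewrite -e mem_head.
move=> /andP [hwa hp] e.
case: (boolP (a \in b0 :: s')) => ha.
- by exists w; split => //; exists a.
- exact: IH ha hp e.
Qed.

Lemma cong_step k u a b : a < k -> b < k ->
  (u + b) %% k = ((u + a) %% k).+1 %% k -> b = a.+1 %% k.
Proof.
move=> ha hb E; rewrite -(modn_small hb); apply/eqP.
rewrite -(eqn_modDl u); apply/eqP; rewrite E -addn1 modnDml addn1 addnS //.
Qed.

Lemma part1 (n : nat) (arc : rel 'I_n) (k : nat) :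
      oriented arc -> unicyclic (underlying arc) ->
      has_girth (underlying arc) k -> k < n ->
      (if odd k then k.+1 else k) <= skew_rank arc.
Proof.
move=> [irra asym] [Hconn [s0 [Hs0 hU0]]] [s [Hs hsk]] kn.
set adj := underlying arc.
have sym : forall i j, adj i j = adj j i by move=> i j; rewrite /adj /underlying orbC.
have irr : forall i, adj i i = false by move=> i; rewrite /adj /underlying irra.
have hU : forall t, is_cycle adj t -> cycle_edges t = cycle_edges s.
  by move=> t ht; rewrite (hU0 _ ht) (hU0 _ Hs).
case: Hs => hs3 us Hcyc.
pose d := Ordinal kn.
have [v [hv [b hb hvb]]] := outside Hconn (s := s) ltac:(lia) ltac:(by case: (s) hs3).
set u := index b s.
have hu : u < k by rewrite -hsk index_mem.
have hvu : adj v (nth d s u) by rewrite nth_index.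
clearbody u; clear hb hvb b.
have Hk2 : k %% 2 = odd k by rewrite modn2.
have [h Hh] : exists h, (if odd k then k.+1 else k) = 2 * h.
  by exists ((if odd k then k.+1 else k)./2); case: (odd k) Hk2; lia.
pose y a := if a is a'.+1 then nth d s ((u + a') %% k) else v.
rewrite Hh; apply: (lemmaB (y := y)).
- move=> [|a] ha /=; first by rewrite modn_small ?addn0.
  have := cyc_adj d Hcyc (i := (u + a) %% k); rewrite hsk => /(_ ltac:(rewrite ltn_pmod //; lia)).
  by rewrite -addn1 modnDml addn1 addnS.
- have cg := @chord_gen n d adj sym irr s us Hcyc hs3 hU.
  have pg := @pend_gen n d adj sym s us Hcyc hs3 hU.
  rewrite hsk in cg pg.
  move=> a b ha hb; rewrite -/adj.
  have hk0 : 0 < k by lia.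
  have hm : forall x, x %% k < k by move=> x; rewrite ltn_pmod.
  case: a ha => [|a] ha; case: b hb => [|b] hb /=.
  + by rewrite irr.
  + move=> H; have := pg v _ _ hv hu (hm _) hvu H.
    have [[e1 e2]|[e1 e2]] := @modk (u + b) k ltac:(case: (odd k) Hh; lia); rewrite e1;
    move=> *; right; left; case: (odd k) Hh; lia.
  + rewrite sym => H; have := pg v _ _ hv hu (hm _) hvu H.
    have [[e1 e2]|[e1 e2]] := @modk (u + a) k ltac:(case: (odd k) Hh; lia); rewrite e1;
    move=> *; left; case: (odd k) Hh; lia.
  + move=> H; have := cg _ _ (hm _) (hm _) H.
    have ak : a < k by case: (odd k) Hh; lia.
    have bk : b < k by case: (odd k) Hh; lia.
    move=> [/(cong_step ak bk) E|/(cong_step bk ak) E].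
    * have [[g1 g2]|[g1 g2]] := @modk a.+1 k ltac:(lia); rewrite g1 in E.
      - right; left; lia.
      - right; right; exists (a.+1 %/ 2), (b.+1 %/ 2); case: (odd k) Hh Hk2 => /= Hh Hk2; lia.
    * have [[g1 g2]|[g1 g2]] := @modk b.+1 k ltac:(lia); rewrite g1 in E.
      - left; lia.
      - right; right; exists (a.+1 %/ 2), (b.+1 %/ 2); case: (odd k) Hh Hk2 => /= Hh Hk2; lia.
Qed.

Theorem theorem4p3 :
  (* the lower bound *)
  (forall (n : nat) (arc : rel 'I_n) (k : nat),
      oriented arc -> unicyclic (underlying arc) ->
      has_girth (underlying arc) k -> k < n ->
      (if odd k then k.+1 else k) <= skew_rank arc)
  /\
  (* sharpness: attained by every orientation of C_k with n-k pendant
     edges attached at one vertex of C_k *)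
  (forall (n k : nat) (arc : rel 'I_n),
      3 <= k -> k < n ->
      oriented arc ->
      (forall i j, underlying arc i j = cycle_with_pendants n k i j) ->
      skew_rank arc = (if odd k then k.+1 else k)).
Proof.
split; [exact: part1 | exact: part2].
Qed.
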